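(* Let $\epsilon>1$ and $\beta>0$. The scalar system $$\dot x=-\beta\frac{x}{(1+x^2)^{1/2}},\qquad x\in\mathbb{R},$$ is $SISS_L\!\left(\frac{\beta}{2},\frac{2\epsilon}{\beta}\right)$, its origin is globally asymptotically stable, and its linearization at $0$ is asymptotically stable.
   Context: Eventually bounded: $f:\mathbb{R}_{\ge0}\to\mathbb{R}^k$ is eventually bounded by $\delta$ if there is $T>0$ with $\|f(t)\|\le\delta$ for all $t\ge T$. $SISS_L(\Delta,N)$ for an input-free system $\dot x=f(x)$: for every $\delta\in(0,\Delta]$ and every bounded measurable $e:\mathbb{R}_{\ge0}\to\mathbb{R}^n$ eventually bounded by $\delta$, every solution of $\dot x=f(x)+e(t)$ is eventually bounded by $N\delta$. *)

(* Defs.v *)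
From Stdlib Require Import Reals Lra.
Open Scope R_scope.

Fixpoint rsum (f : nat -> R) (n : nat) : R :=
  match n with O => 0 | S k => rsum f k + f k end.

Definition null_set (A : R -> Prop) : Prop :=
  forall eps, 0 < eps ->
  exists a b : nat -> R,
    (forall n, a n <= b n) /\
    (forall x, A x -> exists n, a n < x < b n) /\
    (forall N, rsum (fun n => b n - a n) N <= eps).

Definition abs_cont_on (x : R -> R) (l r : R) : Prop :=
  forall eps, 0 < eps -> exists delta, 0 < delta /\
  forall (n : nat) (a b : nat -> R),
    (forall i, (i < n)%nat -> l <= a i /\ a i <= b i /\ b i <= r) ->
    (forall i, (S i < n)%nat -> b i <= a (S i)) ->
    rsum (fun i => b i - a i) n < delta ->
    rsum (fun i => Rabs (x (b i) - x (a i))) n < eps.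

Definition cara_sol (f : R -> R) (e : R -> R) (x : R -> R) : Prop :=
  (forall T, 0 < T -> abs_cont_on x 0 T) /\
  null_set (fun t => 0 <= t /\ ~ derivable_pt_lim x t (f (x t) + e t)).

Definition bounded_on_nonneg (e : R -> R) : Prop :=
  exists M, forall t, 0 <= t -> Rabs (e t) <= M.

Definition eventually_bounded (g : R -> R) (delta : R) : Prop :=
  exists T, 0 < T /\ forall t, T <= t -> Rabs (g t) <= delta.

Definition SISS_L (f : R -> R) (Delta N : R) : Prop :=
  forall delta, 0 < delta -> delta <= Delta ->
  forall e : R -> R, bounded_on_nonneg e -> eventually_bounded e delta ->
  forall x : R -> R, cara_sol f e x -> eventually_bounded x (N * delta).

Definition ode_sol (f : R -> R) (x : R -> R) : Prop :=
  forall t, 0 <= t -> derivable_pt_lim x t (f (x t)).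

Definition lyap_stable0 (f : R -> R) : Prop :=
  forall eps, 0 < eps -> exists delta, 0 < delta /\
  forall x, ode_sol f x -> Rabs (x 0) < delta ->
  forall t, 0 <= t -> Rabs (x t) < eps.

Definition converges_to_0 (x : R -> R) : Prop :=
  forall eta, 0 < eta -> exists T, forall t, T <= t -> Rabs (x t) < eta.

Definition GAS0 (f : R -> R) : Prop :=
  f 0 = 0 /\ lyap_stable0 f /\
  forall x, ode_sol f x -> converges_to_0 x.

Definition AS0 (f : R -> R) : Prop :=
  f 0 = 0 /\ lyap_stable0 f /\
  exists r, 0 < r /\ forall x, ode_sol f x -> Rabs (x 0) < r -> converges_to_0 x.

Definition linearization_AS0 (f : R -> R) : Prop :=
  exists a, derivable_pt_lim f 0 a /\ AS0 (fun y => a * y).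

(* Main.v *)
Require Import Defs.
From Stdlib Require Import Reals Lra Lia Classical FunctionalExtensionality.
From Coquelicot Require Import Coquelicot.
Open Scope R_scope.

Lemma rsum_ext f g n : (forall i, (i < n)%nat -> f i = g i) -> rsum f n = rsum g n.
Proof. induction n; simpl; intros H; auto. rewrite IHn; [rewrite H|]; auto; intros; apply H; lia. Qed.

Lemma rsum_le f g n : (forall i, (i < n)%nat -> f i <= g i) -> rsum f n <= rsum g n.
Proof. induction n; simpl; intros H; [lra|]. assert (f n <= g n) by (apply H; lia).
assert (rsum f n <= rsum g n) by (apply IHn; intros; apply H; lia). lra. Qed.

Lemma rsum_nonneg f n : (forall i, (i < n)%nat -> 0 <= f i) -> 0 <= rsum f n.
Proof. intros H. replace 0 with (rsum (fun _ => 0) n). apply rsum_le; auto.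
induction n; simpl; auto. rewrite IHn; [ring|]. intros; apply H; lia. Qed.

Lemma rsum_mono f n m : (forall i, 0 <= f i) -> (n <= m)%nat -> rsum f n <= rsum f m.
Proof. intros H Hnm. induction Hnm; [lra|]. simpl. specialize (H m). lra. Qed.

Lemma rsum_plus f g n : rsum (fun i => f i + g i) n = rsum f n + rsum g n.
Proof. induction n; simpl; [ring|]. rewrite IHn; ring. Qed.

Lemma rsum_ind (w : nat -> R) n M : (n < M)%nat ->
  rsum (fun j => if Nat.eqb j n then w j else 0) M = w n.
Proof. induction M; intros H; [lia|]. simpl.
destruct (Nat.eqb_spec M n).
- subst. rewrite (rsum_ext _ (fun _ => 0)). 2:{ intros i Hi. destruct (Nat.eqb_spec i n); [lia|auto]. }
  assert (forall k, rsum (fun _ => 0) k = 0) as Z by (induction k; simpl; [|rewrite IHk]; ring).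
  rewrite Z; ring.
- rewrite IHM; [ring|lia]. Qed.

Lemma ext_last f g k v : (forall i, (i < k)%nat -> f i = g i) -> g k = v -> rsum g (S k) = rsum f k + v.
Proof. intros H1 H2. simpl. rewrite H2. rewrite (rsum_ext f g); auto. Qed.

Lemma rsum_abs_affine n (x : R -> R) s K (a b : nat -> R) :
  (forall i, (i < n)%nat -> a i <= b i) ->
  rsum (fun i => Rabs (s * x (b i) + K * b i - (s * x (a i) + K * a i))) n <=
  Rabs s * rsum (fun i => Rabs (x (b i) - x (a i))) n + Rabs K * rsum (fun i => b i - a i) n.
Proof. induction n; intros H; simpl; [lra|].
assert (IH := IHn (fun i Hi => H i (Nat.lt_lt_succ_r _ _ Hi))).
assert (Hn : a n <= b n) by (apply H; lia).
replace (s * x (b n) + K * b n - (s * x (a n) + K * a n)) with (s * (x (b n) - x (a n)) + K * (b n - a n)) by ring.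
pose proof (Rabs_triang (s * (x (b n) - x (a n))) (K * (b n - a n))). rewrite !Rabs_mult in H0. rewrite (Rabs_pos_eq (b n - a n)) in H0 by lra. lra. Qed.

Lemma ac_affine x l r s K : abs_cont_on x l r -> abs_cont_on (fun t => s * x t + K * t) l r.
Proof. intros H eps Heps.
assert (Hs : 0 < Rabs s + 1) by (pose proof (Rabs_pos s); lra).
assert (HK : 0 < Rabs K + 1) by (pose proof (Rabs_pos K); lra).
destruct (H (eps/2/(Rabs s + 1))) as [d1 [Hd1 H1]]. apply Rdiv_lt_0_compat; lra.
exists (Rmin d1 (eps/2/(Rabs K + 1))). split. apply Rmin_pos; auto. apply Rdiv_lt_0_compat; lra.
intros n a b Hi Ho Hsum. cbv beta.
assert (Hab : forall i, (i < n)%nat -> a i <= b i) by (intros i Hi'; destruct (Hi i Hi'); lra).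
assert (X1 := H1 n a b Hi Ho (Rlt_le_trans _ _ _ Hsum (Rmin_l _ _))).
assert (X2 := Rlt_le_trans _ _ _ Hsum (Rmin_r _ _)).
assert (X3 : 0 <= rsum (fun i => b i - a i) n) by (apply rsum_nonneg; intros i Hi'; specialize (Hab i Hi'); lra).
assert (X4 : 0 <= rsum (fun i => Rabs (x (b i) - x (a i))) n) by (apply rsum_nonneg; intros; apply Rabs_pos).
eapply Rle_lt_trans; [apply rsum_abs_affine; auto|].
set (X := rsum (fun i => Rabs (x (b i) - x (a i))) n) in *.
set (Y := rsum (fun i => b i - a i) n) in *.
assert (E1 : (Rabs s + 1) * (eps/2/(Rabs s + 1)) = eps/2) by (field; lra).
assert (E2 : (Rabs K + 1) * (eps/2/(Rabs K + 1)) = eps/2) by (field; lra).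
assert (Rabs s * X <= (Rabs s + 1) * X) by nra.
assert ((Rabs s + 1) * X < (Rabs s + 1) * (eps/2/(Rabs s + 1))) by (apply Rmult_lt_compat_l; lra).
assert (Rabs K * Y <= (Rabs K + 1) * Y) by nra.
assert ((Rabs K + 1) * Y < (Rabs K + 1) * (eps/2/(Rabs K + 1))) by (apply Rmult_lt_compat_l; lra).
lra. Qed.

Lemma dlim_affine z u D s K : derivable_pt_lim z u D -> derivable_pt_lim (fun t => s * z t + K * t) u (s * D + K).
Proof. intro H. change (derivable_pt_lim (plus_fct (mult_real_fct s z) (mult_real_fct K id)) u (s*D+K)).
replace (s*D+K) with (s*D + K*1) by ring. apply derivable_pt_lim_plus.
apply derivable_pt_lim_scal; auto. apply derivable_pt_lim_scal, derivable_pt_lim_id. Qed.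

Lemma deriv_est z x D eta : derivable_pt_lim z x D -> 0 < eta -> exists h, 0 < h /\
  (forall y, x <= y -> y < x + h -> z y <= z x + (D + eta) * (y - x)) /\
  (forall y, x - h < y -> y <= x -> z x <= z y + (D + eta) * (x - y)).
Proof. intros H He. destruct (H eta He) as [del Hd]. exists del. split; [apply cond_pos|]. split.
- intros y H1 H2. destruct (Req_dec y x). subst. lra.
  assert (Hk : y - x <> 0) by lra. assert (Ha : Rabs (y - x) < del) by (rewrite Rabs_pos_eq; lra).
  specialize (Hd _ Hk Ha). replace (x + (y - x)) with y in Hd by ring.
  set (q := (z y - z x) / (y - x)) in *. assert (z y - z x = q * (y - x)) by (unfold q; field; lra).
  apply Rabs_def2 in Hd. nra.
- intros y H1 H2. destruct (Req_dec y x). subst. lra.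
  assert (Hk : y - x <> 0) by lra. assert (Ha : Rabs (y - x) < del) by (rewrite Rabs_left; lra).
  specialize (Hd _ Hk Ha). replace (x + (y - x)) with y in Hd by ring.
  set (q := (z y - z x) / (y - x)) in *. assert (z y - z x = q * (y - x)) by (unfold q; field; lra).
  apply Rabs_def2 in Hd. nra. Qed.

Definition Pinv (z : R -> R) (a b m eta : R) (A B : nat -> R) (s : R) : Prop :=
  a <= s <= b /\ exists (k : nat) (c d : nat -> R) (U : nat -> bool) (M : nat),
   (forall i, (i < k)%nat -> a <= c i /\ c i <= d i /\ d i <= s) /\
   (forall i, (S i < k)%nat -> d i <= c (S i)) /\
   rsum (fun i => d i - c i) k <= rsum (fun n => if U n then B n - A n else 0) M /\
   (forall n, U n = true -> B n <= s \/ s = b) /\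
   z s <= m + eta * (s - a) + rsum (fun i => Rabs (z (d i) - z (c i))) k.

Lemma creep (z : R -> R) (a b l r m : R) (N : R -> Prop) :
  a <= b -> l <= a -> b <= r -> abs_cont_on z l r -> null_set N ->
  (forall u, a <= u -> u <= b -> ~ N u -> exists D, derivable_pt_lim z u D /\ (m <= z u -> D <= 0)) ->
  z a <= m -> z b <= m.
Proof.
intros Hab Hla Hbr HAC HN HD Ha.
assert (key : forall eta eps, 0 < eta -> 0 < eps -> z b <= m + eta * (b - a) + eps).
{ intros eta eps Heta Heps.
  destruct (HAC eps Heps) as [del [Hdel HAC']].
  destruct (HN (del/2)) as [A [B [HAB [Hcov Hsum]]]]; [lra|].
  assert (Pb : Pinv z a b m eta A B b).
  { set (E := Pinv z a b m eta A B).
    assert (Ea : E a).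
    { split; [lra|]. exists 0%nat, (fun _ => 0), (fun _ => 0), (fun _ => false), 0%nat.
      split; [intros; lia|]. split; [intros; lia|]. split; [simpl; lra|]. split; [discriminate|].
      simpl. lra. }
    assert (Hbd : is_upper_bound E b) by (intros x [Hx _]; lra).
    destruct (completeness E (ex_intro _ b Hbd) (ex_intro _ a Ea)) as [s [Hs1 Hs2]].
    assert (Has : a <= s) by (apply Hs1; auto).
    assert (Hsb : s <= b) by (apply Hs2; auto).
    apply NNPP; intro Hnb.
    assert (approx : forall L, L < s -> exists s0, E s0 /\ L < s0 /\ s0 <= s).
    { intros L HL. apply NNPP; intro Hn. assert (is_upper_bound E L).
      { intros x Ex. destruct (Rle_dec x L); auto. exfalso; apply Hn; exists x. split; auto. split; [lra|]. apply Hs1; auto. }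
      specialize (Hs2 L H). lra. }
    assert (fin : forall s', E s' -> s < s' \/ s' = b -> False).
    { intros s' Es [H|H]. specialize (Hs1 s' Es). lra. subst. auto. }
    assert (ltb : forall s0, E s0 -> s0 < b).
    { intros s0 Es. destruct (proj1 Es) as [_ H]. destruct H as [H|H]; auto. subst. exfalso. apply Hnb. auto. }
    destruct (classic (N s)) as [HNs|HNs].
    - destruct (Hcov s HNs) as [n [Hn1 Hn2]].
      destruct (approx (A n) Hn1) as [s0 [Es0 [H01 H02]]].
      assert (Hs0b := ltb s0 Es0).
      destruct Es0 as [[Hs0a _] [k [c [d [U [M [H1 [H2 [H3 [H4 H5]]]]]]]]]].
      assert (HUn : U n = false).
      { destruct (U n) eqn:EU; auto. destruct (H4 n EU); lra. }
      set (dn := Rmin (B n) b).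
      assert (Hdn1 : s0 <= dn) by (unfold dn; apply Rmin_glb; lra).
      assert (Hdn2 : dn <= b) by (apply Rmin_r).
      assert (Hdn3 : dn <= B n) by (apply Rmin_l).
      apply (fin dn).
      + split; [lra|].
        exists (S k), (fun i => if Nat.eqb i k then s0 else c i), (fun i => if Nat.eqb i k then dn else d i),
          (fun j => orb (U j) (Nat.eqb j n)), (Nat.max M (S n)).
        split.
        { intros i Hi. destruct (Nat.eqb_spec i k). lra. assert (i < k)%nat by lia. destruct (H1 i H); lra. }
        split.
        { intros i Hi. destruct (Nat.eqb_spec i k); [lia|]. destruct (Nat.eqb_spec (S i) k).
          - assert (i < k)%nat by lia. destruct (H1 i H) as [_ [_ ?]]; lra.
          - apply H2; lia. }
        split.
        { rewrite (ext_last (fun i => d i - c i) _ k (dn - s0)).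
          2:{ intros i Hi. destruct (Nat.eqb_spec i k); [lia|auto]. }
          2:{ rewrite Nat.eqb_refl. auto. }
          rewrite (rsum_ext (fun j => if (U j || Nat.eqb j n)%bool then B j - A j else 0) (fun j => (if U j then B j - A j else 0) + (if Nat.eqb j n then B j - A j else 0))).
          2:{ intros j _. destruct (U j) eqn:EU; destruct (Nat.eqb_spec j n); simpl; try ring. subst; congruence. }
          rewrite rsum_plus. rewrite rsum_ind by lia.
          assert (rsum (fun n0 => if U n0 then B n0 - A n0 else 0) M <= rsum (fun n0 => if U n0 then B n0 - A n0 else 0) (Nat.max M (S n))).
          { apply rsum_mono; [|lia]. intros i. destruct (U i); [specialize (HAB i); lra|lra]. }
          lra. }
        split.
        { intros j Hj. apply Bool.orb_true_iff in Hj. destruct Hj as [Hj|Hj].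
          - destruct (H4 j Hj); left; lra.
          - apply Nat.eqb_eq in Hj. subst j. unfold dn. unfold Rmin. destruct (Rle_dec (B n) b); [left|right]; lra. }
        { rewrite (ext_last (fun i => Rabs (z (d i) - z (c i))) _ k (Rabs (z dn - z s0))).
          2:{ intros i Hi. destruct (Nat.eqb_spec i k); [lia|auto]. }
          2:{ rewrite Nat.eqb_refl. auto. }
          pose proof (Rle_abs (z dn - z s0)).
          assert (eta * (s0 - a) <= eta * (dn - a)) by (apply Rmult_le_compat_l; lra). lra. }
      + unfold dn, Rmin. destruct (Rle_dec (B n) b); [left|right]; lra.
    - destruct (HD s Has Hsb HNs) as [D [HDs HDm]].
      destruct (Rlt_or_le (z s) m) as [Hzm|Hzm].
      + destruct (deriv_est z s D 1 HDs) as [h [Hh [Hr _]]]; [lra|].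
        set (q := Rabs (D + 1) + 1).
        assert (Hq : 0 < q) by (unfold q; pose proof (Rabs_pos (D+1)); lra).
        set (t := Rmin (h/2) ((m - z s)/q)).
        assert (Ht : 0 < t) by (apply Rmin_pos; [lra|apply Rdiv_lt_0_compat; lra]).
        assert (Ht1 : t <= h/2) by apply Rmin_l.
        assert (Ht2 : t * q <= m - z s).
        { assert (t <= (m - z s)/q) by apply Rmin_r.
          assert (t * q <= (m - z s)/q * q) by (apply Rmult_le_compat_r; lra).
          assert ((m - z s)/q * q = m - z s) by (field; lra). lra. }
        set (s' := Rmin (s + t) b).
        assert (Hs'1 : s <= s') by (apply Rmin_glb; lra).
        assert (Hs'2 : s' <= s + t) by apply Rmin_l.
        assert (Hs'3 : s' <= b) by apply Rmin_r.
        apply (fin s').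
        * split; [lra|]. exists 0%nat, (fun _ => 0), (fun _ => 0), (fun _ => false), 0%nat.
          split; [intros; lia|]. split; [intros; lia|]. split; [simpl; lra|]. split; [discriminate|].
          simpl. specialize (Hr s' Hs'1 ltac:(lra)).
          pose proof (Rle_abs (D + 1)).
          assert ((D + 1) * (s' - s) <= Rabs (D + 1) * (s' - s)) by (apply Rmult_le_compat_r; lra).
          assert (Rabs (D + 1) * (s' - s) <= Rabs (D + 1) * t) by (apply Rmult_le_compat_l; [apply Rabs_pos|lra]).
          assert (eta * (s' - a) >= 0) by (apply Rle_ge, Rmult_le_pos; lra).
          unfold q in Ht2. lra.
        * unfold s', Rmin. destruct (Rle_dec (s + t) b); [left|right]; lra.
      + assert (HD0 := HDm Hzm).
        destruct (deriv_est z s D eta HDs Heta) as [h [Hh [Hr Hl]]].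
        destruct (approx (s - h) ltac:(lra)) as [s0 [Es0 [H01 H02]]].
        assert (Hs0b := ltb s0 Es0).
        destruct Es0 as [[Hs0a _] [k [c [d [U [M [H1 [H2 [H3 [H4 H5]]]]]]]]]].
        set (s' := Rmin (s + h/2) b).
        assert (Hs'1 : s <= s') by (apply Rmin_glb; lra).
        assert (Hs'2 : s' <= s + h/2) by apply Rmin_l.
        assert (Hs'3 : s' <= b) by apply Rmin_r.
        apply (fin s').
        * split; [lra|]. exists k, c, d, U, M.
          split. { intros i Hi. destruct (H1 i Hi); lra. }
          split; auto. split; auto.
          split. { intros j Hj. destruct (H4 j Hj); left; lra. }
          specialize (Hr s' Hs'1 ltac:(lra)). specialize (Hl s0 H01 H02).
          assert ((D + eta) * (s - s0) <= eta * (s - s0)) by (apply Rmult_le_compat_r; lra).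
          assert ((D + eta) * (s' - s) <= eta * (s' - s)) by (apply Rmult_le_compat_r; lra).
          lra.
        * unfold s', Rmin. destruct (Rle_dec (s + h/2) b); [left|right]; lra. }
  destruct Pb as [_ [k [c [d [U [M [H1 [H2 [H3 [H4 H5]]]]]]]]]].
  assert (rsum (fun i => Rabs (z (d i) - z (c i))) k < eps).
  { apply HAC'.
    - intros i Hi. destruct (H1 i Hi); lra.
    - auto.
    - assert (rsum (fun n => if U n then B n - A n else 0) M <= rsum (fun n => B n - A n) M).
      { apply rsum_le. intros i _. destruct (U i); [lra|specialize (HAB i); lra]. }
      specialize (Hsum M). lra. }
  lra. }
apply Rnot_lt_le; intro Hc.
set (g := z b - m).
set (eta := g / (4 * (b - a + 1))).
assert (Heta : 0 < eta) by (apply Rdiv_lt_0_compat; unfold g; lra).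
assert (E : eta * (b - a + 1) = g / 4) by (unfold eta; field; lra).
specialize (key eta (g/4) Heta ltac:(unfold g; lra)).
assert (eta * (b - a) <= eta * (b - a + 1)) by (apply Rmult_le_compat_l; lra).
unfold g in *. lra.
Qed.

Lemma event (z : R -> R) (N : R -> Prop) T0 c g : 0 < T0 -> 0 < g ->
  (forall T, 0 < T -> abs_cont_on z 0 T) -> null_set N ->
  (forall u, T0 <= u -> ~ N u -> exists D, derivable_pt_lim z u D /\ (c <= z u -> D <= - g)) ->
  exists T, T0 <= T /\ forall t, T <= t -> z t <= c.
Proof.
intros HT0 Hg HAC HN HD.
assert (St1 : exists T1, T0 <= T1 /\ z T1 <= c).
{ apply NNPP; intro Hn.
  assert (Hgt : forall u, T0 <= u -> c < z u).
  { intros u Hu. apply Rnot_le_lt. intro. apply Hn. exists u; auto. }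
  set (t1 := T0 + (Rabs (z T0 - c) + 1)/g).
  assert (Et : g * t1 = g * T0 + (Rabs (z T0 - c) + 1)) by (unfold t1; field; lra).
  assert (Ht1 : T0 <= t1).
  { unfold t1. pose proof (Rabs_pos (z T0 - c)).
    assert (0 < (Rabs (z T0 - c) + 1)/g) by (apply Rdiv_lt_0_compat; lra). lra. }
  assert (Hy := creep (fun t => 1 * z t + g * t) T0 t1 0 t1 (1 * z T0 + g * T0) N Ht1 ltac:(lra) ltac:(lra)
     (ac_affine z 0 t1 1 g (HAC t1 ltac:(lra))) HN).
  cbv beta in Hy.
  assert (1 * z t1 + g * t1 <= 1 * z T0 + g * T0).
  { apply Hy; [|lra]. intros u Hu1 Hu2 HNu. destruct (HD u Hu1 HNu) as [D [HD1 HD2]].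
    exists (1 * D + g). split. apply dlim_affine; auto. intros _. specialize (HD2 (Rlt_le _ _ (Hgt u Hu1))). lra. }
  specialize (Hgt t1 Ht1). pose proof (Rle_abs (z T0 - c)). lra. }
destruct St1 as [T1 [HT1 HzT1]]. exists T1. split; auto. intros t Ht.
apply (creep z T1 t 0 t c N); auto; try lra.
- apply HAC. lra.
- intros u Hu1 Hu2 HNu. destruct (HD u ltac:(lra) HNu) as [D [HD1 HD2]]. exists D. split; auto.
  intro H. specialize (HD2 H). lra.
Qed.

Lemma sq_mvt g x s t : ode_sol g x -> 0 <= s -> s < t ->
  exists c, x t * x t - x s * x s = 2 * (x c * g (x c)) * (t - s) /\ s < c < t.
Proof. intros Hx Hs Hst. apply (MVT_cor2 (fun t => x t * x t) (fun t => 2 * (x t * g (x t)))); auto.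
intros c Hc. change (derivable_pt_lim (mult_fct x x) c (2 * (x c * g (x c)))).
replace (2 * (x c * g (x c))) with (g (x c) * x c + x c * g (x c)) by ring.
apply derivable_pt_lim_mult; apply Hx; lra. Qed.

Lemma sq_mono g x s t : (forall y, y * g y <= 0) -> ode_sol g x -> 0 <= s -> s <= t -> x t * x t <= x s * x s.
Proof. intros Hg Hx Hs Hst. destruct (Req_dec s t). subst; lra.
destruct (sq_mvt g x s t Hx Hs ltac:(lra)) as [c [Hc1 Hc2]]. specialize (Hg (x c)).
assert (2 * (x c * g (x c)) * (t - s) <= 0) by (apply Rmult_le_0_r; lra). lra. Qed.

Lemma abs_sq y : Rabs y * Rabs y = y * y.
Proof. rewrite <- Rabs_mult. apply Rabs_pos_eq. nra. Qed.

Lemma sq_le_abs a b : a * a <= b * b -> Rabs a <= Rabs b.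
Proof. intros H. rewrite <- (abs_sq a), <- (abs_sq b) in H. pose proof (Rabs_pos a). pose proof (Rabs_pos b). nra. Qed.

Lemma ode_gas g : (forall y, y * g y <= 0) ->
  (forall eta M, 0 < eta -> exists k, 0 < k /\ forall y, eta * eta <= y * y -> y * y <= M * M -> y * g y <= - k) ->
  lyap_stable0 g /\ forall x, ode_sol g x -> converges_to_0 x.
Proof. intros Hg Hk. split.
- intros ep Hep. exists ep. split; auto. intros x Hx H0 t Ht.
  pose proof (sq_le_abs _ _ (sq_mono g x 0 t Hg Hx ltac:(lra) Ht)). lra.
- intros x Hx eta Heta. destruct (Rlt_or_le (Rabs (x 0)) eta) as [Hl|Hl].
  + exists 0. intros t Ht. pose proof (sq_le_abs _ _ (sq_mono g x 0 t Hg Hx ltac:(lra) Ht)). lra.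
  + destruct (Hk eta (Rabs (x 0)) Heta) as [k [Hk0 Hk1]].
    exists (x 0 * x 0 / (2 * k) + 1). intros t Ht. apply Rnot_le_lt. intro Hge.
    assert (E : 2 * k * (x 0 * x 0 / (2 * k)) = x 0 * x 0) by (field; lra).
    assert (Hx0 : 0 <= x 0 * x 0) by nra.
    assert (Hx00 : 0 <= x 0 * x 0 / (2 * k)) by (apply Rmult_le_pos; [lra|left; apply Rinv_0_lt_compat; lra]).
    destruct (sq_mvt g x 0 t Hx ltac:(lra) ltac:(lra)) as [c [Hc1 Hc2]].
    assert (A1 := sq_mono g x 0 c Hg Hx ltac:(lra) ltac:(lra)).
    assert (A2 := sq_mono g x c t Hg Hx ltac:(lra) ltac:(lra)).
    assert (A3 : eta * eta <= x t * x t) by (rewrite <- (abs_sq (x t)); nra).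
    rewrite abs_sq in Hk1.
    specialize (Hk1 (x c) ltac:(lra) A1).
    assert (2 * (x c * g (x c)) * (t - 0) <= 2 * (-k) * t) by nra.
    nra.
Qed.

Lemma fderiv0 (beta : R) : derivable_pt_lim (fun x => - beta * x / sqrt (1 + x^2)) 0 (-beta).
Proof. apply is_derive_Reals. auto_derive.
- replace (1 + 0*(0*1)) with 1 by ring. rewrite sqrt_1. split; [lra|split; [lra|exact I]].
- replace (1 + 0*(0*1)) with 1 by ring. rewrite sqrt_1. field. Qed.

Theorem lemma2 (eps beta : R) (Heps : 1 < eps) (Hbeta : 0 < beta) :
  let f := fun x : R => - beta * x / sqrt (1 + x ^ 2) in
  SISS_L f (beta / 2) (2 * eps / beta) /\ GAS0 f /\ linearization_AS0 f.
Proof.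
intros f.
assert (Hf : forall y, f y = - beta * y / sqrt (1 + y ^ 2)) by reflexivity.
assert (Hsq : forall y, 0 < sqrt (1 + y^2)) by (intros; apply sqrt_lt_R0; nra).
assert (Hsq2 : forall y, sqrt (1 + y^2) * sqrt (1 + y^2) = 1 + y^2) by (intros; apply sqrt_sqrt; nra).
assert (fodd : forall y, f (- y) = - f y).
{ intros y. rewrite !Hf. replace ((- y)^2) with (y^2) by ring. unfold Rdiv; ring. }
assert (fmono : forall c y, 0 < c -> c <= y -> f y <= - (beta * c / sqrt (1 + c^2))).
{ intros c y Hc Hcy. rewrite Hf.
  pose proof (Hsq y) as Hp. pose proof (Hsq c) as Hq. pose proof (Hsq2 y) as Hp2. pose proof (Hsq2 c) as Hq2.
  set (p := sqrt (1 + y^2)) in *. set (q := sqrt (1 + c^2)) in *.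
  assert (H0 : (y*q)*(y*q) - (c*p)*(c*p) = y*y - c*c).
  { replace ((y*q)*(y*q) - (c*p)*(c*p)) with (y*y*(q*q) - c*c*(p*p)) by ring. rewrite Hp2, Hq2. ring. }
  assert (H00 : 0 <= y * q) by nra. assert (H01 : 0 < c * p) by nra.
  assert (H1 : y * q >= c * p).
  { apply Rnot_lt_ge. intro Hlt. assert ((y*q)*(y*q) < (c*p)*(c*p)) by (apply Rmult_le_0_lt_compat; lra). nra. }
  assert (H2 : y / p - c / q = (y * q - c * p) / (p * q)) by (field; lra).
  assert (H3 : 0 <= (y * q - c * p) / (p * q)).
  { unfold Rdiv; apply Rmult_le_pos; [lra| left; apply Rinv_0_lt_compat; nra]. }
  assert (H4 : - beta * y / p = - (beta * (y / p))) by (unfold Rdiv; ring).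
  assert (H5 : beta * c / q = beta * (c / q)) by (unfold Rdiv; ring).
  rewrite H4, H5. assert (beta * (c / q) <= beta * (y / p)) by (apply Rmult_le_compat_l; lra). lra. }
split; [|split].
- intros delta Hd Hd2 e [Me HMe] [T0 [HT0 He]] x [HAC Hnull].
  set (c := 2 * eps / beta * delta).
  assert (Hc : 0 < c) by (unfold c; apply Rmult_lt_0_compat; [apply Rdiv_lt_0_compat|]; lra).
  pose proof (Hsq c) as Hq. pose proof (Hsq2 c) as Hq2.
  set (q := sqrt (1 + c^2)) in *.
  set (g := beta * c / q - delta).
  assert (Hg : 0 < g).
  { assert (Hbc : beta * c = 2 * eps * delta) by (unfold c; field; lra).
    assert (Hr : 2 * delta / beta <= 1).
    { assert (2 * delta / beta = 1 - (beta - 2 * delta) / beta) by (field; lra).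
      assert (0 <= (beta - 2 * delta) / beta) by (apply Rmult_le_pos; [lra|left; apply Rinv_0_lt_compat; lra]). lra. }
    assert (Hdc : delta * c = eps * delta * (2 * delta / beta)) by (unfold c; field; lra).
    assert (Hdc2 : delta * c <= eps * delta).
    { rewrite Hdc. assert (0 < eps * delta) by nra. nra. }
    assert (Hdq : delta * q < beta * c).
    { assert ((delta * q) * (delta * q) < (beta * c) * (beta * c)).
      { replace ((delta * q) * (delta * q)) with (delta * delta * (q * q)) by ring. rewrite Hq2, Hbc.
        assert (0 <= delta * c) by nra.
        replace (delta * delta * (1 + c^2)) with (delta * delta + (delta * c) * (delta * c)) by ring.
        assert ((delta * c) * (delta * c) <= (eps * delta) * (eps * delta)) by (apply Rmult_le_compat; lra).
        assert (0 < delta * delta) by nra. assert (1 < eps * eps) by nra.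
        assert (delta * delta < (eps * eps) * (delta * delta)) by nra. nra. }
      apply Rnot_le_lt. intro Hle. assert (0 <= beta * c) by nra.
      assert ((beta * c) * (beta * c) <= (delta * q) * (delta * q)) by (apply Rmult_le_compat; lra). lra. }
    unfold g. assert (beta * c / q - delta = (beta * c - delta * q) / q) by (field; lra).
    rewrite H. apply Rdiv_lt_0_compat; lra. }
  set (Nset := fun t => 0 <= t /\ ~ derivable_pt_lim x t (f (x t) + e t)).
  assert (Hder : forall u, T0 <= u -> ~ Nset u -> derivable_pt_lim x u (f (x u) + e u)).
  { intros u Hu HN. apply NNPP. intro Hn. apply HN. split; auto; lra. }
  destruct (event x Nset T0 c g HT0 Hg HAC Hnull) as [T1 [HT1 H1]].
  { intros u Hu HNu. exists (f (x u) + e u). split; auto. intro Hcu.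
    specialize (fmono c (x u) Hc Hcu). fold q in fmono. pose proof (Rle_abs (e u)). specialize (He u Hu). unfold g; lra. }
  destruct (event (fun t => - x t) Nset T0 c g HT0 Hg) as [T2 [HT2 H2]].
  { intros T HT. assert (Hext : (fun t => - x t) = (fun t => -1 * x t + 0 * t)) by (apply functional_extensionality; intros; ring).
    rewrite Hext. apply ac_affine; auto. }
  { auto. }
  { intros u Hu HNu. exists (- (f (x u) + e u)). split.
    - exact (derivable_pt_lim_opp x u _ (Hder u Hu HNu)).
    - intro Hcu. specialize (fmono c (- x u) Hc Hcu). rewrite fodd in fmono. fold q in fmono.
      pose proof (Rle_abs (- e u)). rewrite Rabs_Ropp in H. specialize (He u Hu). unfold g; lra. }
  exists (Rmax T1 T2). split. { pose proof (Rmax_l T1 T2). lra. }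
  intros t Ht. apply Rabs_le. pose proof (Rmax_l T1 T2). pose proof (Rmax_r T1 T2).
  specialize (H1 t ltac:(lra)). specialize (H2 t ltac:(lra)). cbv beta in H2. fold c. lra.
- split. { rewrite Hf. unfold Rdiv. ring. }
  apply ode_gas.
  + intro y. rewrite Hf.
    assert (y * (- beta * y / sqrt (1 + y^2)) = - (beta * (y * y) * / sqrt (1 + y^2))) by (unfold Rdiv; ring).
    rewrite H. pose proof (Rinv_0_lt_compat _ (Hsq y)). assert (0 <= y * y) by nra.
    assert (0 <= beta * (y * y) * / sqrt (1 + y^2)) by (apply Rmult_le_pos; [nra|lra]). lra.
  + intros eta M Heta. exists (beta * (eta * eta) * / sqrt (1 + M * M)).
    assert (HQ : 0 < sqrt (1 + M * M)) by (apply sqrt_lt_R0; nra).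
    split. { apply Rmult_lt_0_compat; [apply Rmult_lt_0_compat; [lra|apply Rmult_lt_0_compat; lra]|apply Rinv_0_lt_compat; auto]. }
    intros y Hy1 Hy2. rewrite Hf.
    assert (Hpq : sqrt (1 + y^2) <= sqrt (1 + M * M)) by (apply sqrt_le_1_alt; nra).
    assert (Hi : / sqrt (1 + M * M) <= / sqrt (1 + y^2)) by (apply Rinv_le_contravar; auto).
    assert (Hi0 : 0 < / sqrt (1 + M * M)) by (apply Rinv_0_lt_compat; auto).
    assert (eta * eta * / sqrt (1 + M * M) <= y * y * / sqrt (1 + y^2)) by (apply Rmult_le_compat; nra).
    assert (y * (- beta * y / sqrt (1 + y^2)) = - (beta * (y * y * / sqrt (1 + y^2)))) by (unfold Rdiv; ring).
    rewrite H0. assert (beta * (eta * eta * / sqrt (1 + M * M)) <= beta * (y * y * / sqrt (1 + y^2))) by (apply Rmult_le_compat_l; lra).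
    rewrite Rmult_assoc. lra.
- exists (- beta). split. { exact (fderiv0 beta). }
  destruct (ode_gas (fun y => - beta * y)) as [HL HC].
  { intro y. nra. }
  { intros eta M Heta. exists (beta * (eta * eta)). split; [apply Rmult_lt_0_compat; [lra|apply Rmult_lt_0_compat; lra]|]. intros y H1 H2. cbv beta. nra. }
  split; [ring|]. split; auto. exists 1. split; [lra|]. intros x Hx _. apply HC; auto.
Qed.
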